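(* For any myopic equilibrium $\mathbf{s}$ of a $k$-round Funding Game with bundle sizes $m^1,\dots,m^k$, we have for each $t\in\{1,\dots,k\}$: $$\Delta^t \;\ge\; \frac{sw(\mathbf{s}^t)}{m^t} \;\ge\; \Delta^{t+1}.$$
   Context: Players $1,\dots,n$ have valuation functions $v_i:\{0,\dots,m\}\to\mathbb{R}_{\ge0}$ with $v_i(0)=0$, nondecreasing, with diminishing marginal returns $v_i(x)-v_i(x-1)\ge v_i(x+1)-v_i(x)$. A (single-round) Funding Game with $M$ items and such valuations $w_i$: each player submits a request $(x_i,\tilde v_i)$ with $x_i\in\{0,\dots,M\}$ and $0\le \tilde v_i\le w_i(x_i)$; the Highest Ratio Greedy mechanism considers requests in descending order of $\tilde v_i/x_i$ (ties in favor of lower index) and grants each in turn $\min(x_i,\text{items still available})$ items; payoff is $w_i$ of the number of items received; a Nash equilibrium is a request profile where no player can increase its payoff by changing its own valid request. A $k$-round Funding Game with bundle sizes $m^1,\dots,m^k$ (positive integers, $\sum_t m^t=m$) consists of rounds $t=1,\dots,k$; in round $t$ a single-round Funding Game $G^t$ is played with $m^t$ items and marginal valuations $v_i^t(x)=v_i(x+\alpha_i^{t-1})-v_i(\alpha_i^{t-1})$, where $X_i^t$ is the number of items player $i$ receives in round $t$ and $\alpha_i^t=\sum_{j\le t}X_i^j$, $\alpha_i^0=0$. $\mathbf{s}^t$ is the request profile in round $t$ and $\mathbf{s}=(\mathbf{s}^1,\dots,\mathbf{s}^k)$. $\mathbf{s}$ is a myopic equilibrium if each $\mathbf{s}^t$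 is a Nash equilibrium of $G^t$. $sw(\mathbf{s}^t)=\sum_i v_i^t(X_i^t)$, $sw(\mathbf{s})=\sum_i v_i(\alpha_i^k)$, and $\Delta^t=\max_i v_i^t(1)$ for $t=1,\dots,k+1$ (with $v_i^{k+1}(x)=v_i(x+\alpha_i^k)-v_i(\alpha_i^k)$). *)

(* Defs.v *)
From HB Require Import structures.
From mathcomp Require Import all_boot all_order all_algebra.
Set Implicit Arguments. Unset Strict Implicit. Unset Printing Implicit Defensive.
Import Order.TTheory GRing.Theory Num.Theory.
Local Open Scope ring_scope.

Section FundingGame.
Variable R : realFieldType.
Variable n : nat.

(* A request (x, v~) : number of items requested and claimed value. *)
Definition request := (nat * R)%type.
Definition profile := 'I_n -> request.

(* ratio v~/x  (for x = 0 this is 0 by MathComp's convention 0^-1 = 0;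
   such requests are granted 0 items anyway). *)
Definition ratio (r : request) : R := r.2 / (r.1)%:R.

Definition prec (s : profile) (i j : 'I_n) : bool :=
  (ratio (s j) < ratio (s i)) || ((ratio (s i) == ratio (s j)) && (i <= j)%N).

Definition hrg_order (s : profile) : seq 'I_n := sort (prec s) (enum 'I_n).

Fixpoint grant (avail : nat) (l : seq 'I_n) (x : 'I_n -> nat) : 'I_n -> nat :=
  match l with
  | [::] => fun _ => 0%N
  | i :: l' => let g := minn (x i) avail in
               fun j => if j == i then g else grant (avail - g) l' x j
  end.

Definition alloc (M : nat) (s : profile) : 'I_n -> nat :=
  grant M (hrg_order s) (fun i => (s i).1).

Definition valid_req (M : nat) (w : nat -> R) (r : request) : bool :=
  [&& (r.1 <= M)%N, 0 <= r.2 & r.2 <= w r.1].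

Definition upd (s : profile) (i : 'I_n) (r : request) : profile :=
  fun j => if j == i then r else s j.

Definition nash (M : nat) (w : 'I_n -> nat -> R) (s : profile) : Prop :=
  (forall i, valid_req M (w i) (s i)) /\
  (forall i (r : request), valid_req M (w i) r ->
     w i (alloc M (upd s i r) i) <= w i (alloc M s i)).

(* k-round game: rounds t = 1..k, bundle sizes mb t, profiles s t. *)
Fixpoint alpha (mb : nat -> nat) (s : nat -> profile) (t : nat) : 'I_n -> nat :=
  match t with
  | 0 => fun _ => 0%N
  | t'.+1 => fun i => (alpha mb s t' i + alloc (mb t) (s t) i)%N
  end.

Definition vt (v : 'I_n -> nat -> R) (mb : nat -> nat) (s : nat -> profile)
  (t : nat) (i : 'I_n) (x : nat) : R :=
  v i (x + alpha mb s t.-1 i)%N - v i (alpha mb s t.-1 i).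

Definition myopic_eq (v : 'I_n -> nat -> R) (k : nat) (mb : nat -> nat)
  (s : nat -> profile) : Prop :=
  forall t, (1 <= t <= k)%N -> nash (mb t) (vt v mb s t) (s t).

Definition sw_round (v : 'I_n -> nat -> R) (mb : nat -> nat) (s : nat -> profile)
  (t : nat) : R :=
  \sum_(i < n) vt v mb s t i (alloc (mb t) (s t) i).

(* Delta^t = max_i v_i^t(1)  (values are >= 0, so 0 is a neutral start) *)
Definition Delta (v : 'I_n -> nat -> R) (mb : nat -> nat) (s : nat -> profile)
  (t : nat) : R :=
  \big[Num.max/0]_(i < n) vt v mb s t i 1%N.

End FundingGame.

(* Main.v *)
Require Import Defs.
From HB Require Import structures.
From mathcomp Require Import all_boot all_order all_algebra.
From mathcomp Require Import zify ring lra.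
Import Order.TTheory GRing.Theory Num.Theory.
Set Implicit Arguments. Unset Strict Implicit.

Section Comb.
Variable n : nat.

Lemma grant_notin avail (l : seq 'I_n) x j : j \notin l -> grant avail l x j = 0%N.
Proof.
elim: l avail => [|a l IH] avail //=.
rewrite in_cons negb_or => /andP[ja jl]. by rewrite (negbTE ja) IH.
Qed.

Lemma grant_prefix avail (l : seq 'I_n) x p : uniq l ->
  (\sum_(k <- take p l) grant avail l x k = minn avail (\sum_(k <- take p l) x k))%N.
Proof.
elim: l avail p => [|a l IH] avail p /=.
  by rewrite !big_nil; lia.
move=> /andP[al ul]. case: p => [|p] /=; first by rewrite !big_nil; lia.
rewrite !big_cons /= (_ : a == a = true); last exact/eqP.
rewrite (@eq_big_seq _ _ _ _ _ _ (grant (avail - minn (x a) avail) l x)); last first.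
  move=> k kin. have : k != a.
    by apply/eqP => ka; move: al; rewrite -ka (mem_take kin).
  by move/negbTE => ->.
rewrite IH //. lia.
Qed.

Lemma grant_index avail (l : seq 'I_n) x j : uniq l -> j \in l ->
  grant avail l x j = minn (x j) (avail - \sum_(k <- take (index j l) l) x k).
Proof.
elim: l avail => [|a l IH] avail //= /andP[al ul].
rewrite in_cons. case: (eqVneq j a) => [->|ja] /=.
  by rewrite /= big_nil subn0.
move=> jl. rewrite big_cons IH //. lia.
Qed.

End Comb.

Lemma take_index_filter (T : eqType) (e : rel T) (l : seq T) j :
  transitive e -> (forall a b, e a b -> e b a -> a = b) ->
  sorted e l -> uniq l -> j \in l ->
  take (index j l) l = [seq k <- l | e k j && (k != j)].
Proof.
move=> tr an; elim: l => [|a l IH] //= sl /andP[al ul].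
have hall := order_path_min tr sl.
have sl' := path_sorted sl.
rewrite in_cons; case: (eqVneq j a) => [->|ja] /=.
  move=> _.
  rewrite andbF -(filter_pred0 l). apply: eq_in_filter.
  move=> k kl /=. apply/esym/negbTE; apply/negP => /andP[eka _].
  have eak : e a k by move/allP: hall => /(_ k kl).
  by move: al; rewrite (an _ _ eak eka) kl.
move=> jl. rewrite andbT IH //.
have -> : e a j by move/allP: hall => /(_ j jl).
by [].
Qed.

Section Prec.
Variable R : realFieldType.
Variable n : nat.
Local Open Scope ring_scope.
Implicit Types s : profile R n.

Lemma prec_total (s : profile R n) : total (prec s).
Proof.
move=> a b; rewrite /prec.
case: (ltgtP (Defs.ratio (s b)) (Defs.ratio (s a))) => //=. move=> _; exact: leq_total.
Qed.

Lemma prec_trans (s : profile R n) : transitive (prec s).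
Proof.
move=> b a c; rewrite /prec.
case/orP=> [h1|/andP[/eqP h1 h1']]; case/orP=> [h2|/andP[/eqP h2 h2']].
- by rewrite (lt_trans h2 h1).
- by rewrite -h2 h1.
- by rewrite h1 h2.
- by rewrite h1 h2 eqxx (leq_trans h1') ?orbT.
Qed.

Lemma prec_anti (s : profile R n) a b : prec s a b -> prec s b a -> a = b.
Proof.
rewrite /prec.
case/orP=> [h1|/andP[/eqP h1 h1']]; case/orP=> [h2|/andP[/eqP h2 h2']].
- by move: (lt_trans h1 h2); rewrite ltxx.
- by move: h1; rewrite h2 ltxx.
- by move: h2; rewrite h1 ltxx.
- by apply/val_inj/eqP; rewrite eqn_leq h1' h2'.
Qed.

Definition before (s : profile R n) a b := prec s a b && (a != b).

Lemma hrg_sorted s : sorted (prec s) (hrg_order s).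
Proof. exact: (sort_sorted (@prec_total s)). Qed.

Lemma hrg_uniq s : uniq (hrg_order s).
Proof. by rewrite /hrg_order sort_uniq enum_uniq. Qed.

Lemma hrg_mem s j : j \in hrg_order s.
Proof. by rewrite /hrg_order mem_sort mem_enum. Qed.

Lemma hrg_perm s : perm_eq (hrg_order s) (index_enum 'I_n).
Proof.
rewrite /hrg_order perm_sort.
apply: uniq_perm; rewrite ?enum_uniq ?index_enum_uniq // => x.
by rewrite mem_enum mem_index_enum.
Qed.

Lemma take_hrg s j : take (index j (hrg_order s)) (hrg_order s) =
  [seq k <- hrg_order s | before s k j].
Proof.
apply: take_index_filter; [exact: prec_trans|exact: prec_anti|
  exact: hrg_sorted|exact: hrg_uniq|exact: hrg_mem].
Qed.

Lemma sum_take_hrg s j (f : 'I_n -> nat) :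
  (\sum_(k <- take (index j (hrg_order s)) (hrg_order s)) f k =
   \sum_(k | before s k j) f k)%N.
Proof.
by rewrite take_hrg big_filter (perm_big _ (hrg_perm s)).
Qed.

Definition req (s : profile R n) k := (s k).1.

Lemma alloc_eq M s j : alloc M s j =
  minn (req s j) (M - \sum_(k | before s k j) req s k).
Proof.
by rewrite /alloc grant_index ?hrg_uniq ?hrg_mem // sum_take_hrg.
Qed.

Lemma alloc_prefix M s j :
  (\sum_(k | before s k j) alloc M s k = minn M (\sum_(k | before s k j) req s k))%N.
Proof.
rewrite -!sum_take_hrg. exact: grant_prefix (hrg_uniq s).
Qed.

Lemma alloc_total M s : (\sum_k alloc M s k <= M)%N.
Proof.
rewrite -(perm_big _ (hrg_perm s)) /= -{1}(take_size (hrg_order s)).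
rewrite /alloc grant_prefix ?hrg_uniq //. exact: geq_minl.
Qed.

Lemma alloc_le_req M s j : (alloc M s j <= req s j)%N.
Proof. rewrite alloc_eq; exact: geq_minl. Qed.

Lemma sum_sub (P Q : pred 'I_n) (f : 'I_n -> nat) : (forall k, P k -> Q k) ->
  (\sum_(k | P k) f k <= \sum_(k | Q k) f k)%N.
Proof.
move=> PQ. rewrite [X in (_ <= X)%N](bigID P) /=.
rewrite (@eq_bigl _ _ _ _ _ (fun k => Q k && P k) P); first exact: leq_addr.
move=> k /=. case Pk: (P k); last by rewrite andbF.
by rewrite (PQ _ Pk).
Qed.

Lemma sum_eq_pointwise (P : pred 'I_n) (f g : 'I_n -> nat) :
  (forall k, f k <= g k)%N -> (\sum_(k | P k) f k = \sum_(k | P k) g k)%N ->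
  forall k, P k -> f k = g k.
Proof.
move=> fg hs k Pk. apply/eqP; rewrite eqn_leq fg /= leqNgt; apply/negP => lt.
move: hs; rewrite (bigD1 k) //= [in RHS](bigD1 k) //=.
move/eqP; apply/negP; rewrite neq_ltn; apply/orP; left.
by apply: (leq_add lt); apply: leq_sum => i _; exact: fg.
Qed.

End Prec.

Section Conc.
Variable R : realFieldType.
Local Open Scope ring_scope.
Variable f : nat -> R.
Hypothesis f0 : f 0%N = 0.
Hypothesis fconc : forall x, f x.+2 - f x.+1 <= f x.+1 - f x.

Lemma marg_le a b : (a <= b)%N -> f b.+1 - f b <= f a.+1 - f a.
Proof.
elim: b => [|b IH]; first by rewrite leqn0 => /eqP ->.
rewrite leq_eqVlt => /orP[/eqP ->//|]. rewrite ltnS => ab.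
exact: le_trans (fconc b) (IH ab).
Qed.

Lemma f_le_lin x : f x <= x%:R * f 1%N.
Proof.
elim: x => [|x IH]; first by rewrite f0 mul0r.
have := marg_le (leq0n x). rewrite f0 subr0 -natr1 mulrDl mul1r => h.
lra.
Qed.

Lemma f_ge_marg x : x%:R * (f x.+1 - f x) <= f x.
Proof.
elim: x => [|x IH]; first by rewrite f0 mul0r.
have h := fconc x.
have hx : 0 <= x%:R :> R by apply: ler0n.
have : x%:R * (f x.+2 - f x.+1) <= x%:R * (f x.+1 - f x) by apply: ler_wpM2l.
rewrite -natr1 mulrDl mul1r. lra.
Qed.

Lemma g_step x : (0 < x)%N -> f x.+1 / x.+1%:R <= f x / x%:R.
Proof.
move=> x0. have xp : 0 < x%:R :> R by rewrite ltr0n.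
have xp1 : 0 < x.+1%:R :> R by rewrite ltr0n.
rewrite ler_pdivrMr // mulrAC ler_pdivlMr //.
have := f_ge_marg x. rewrite -natr1. nra.
Qed.

Lemma g_dec X x : (0 < X)%N -> (X <= x)%N -> f x / x%:R <= f X / X%:R.
Proof.
move=> X0; elim: x => [|x IH]; first by rewrite leqn0 => /eqP E; move: X0; rewrite E.
rewrite leq_eqVlt => /orP[/eqP ->//|]. rewrite ltnS => Xx.
apply: le_trans (IH Xx). apply: g_step. exact: leq_trans X0 Xx.
Qed.

Lemma g_ge_marg x : f x.+1 - f x <= f x.+1 / x.+1%:R.
Proof.
have xp1 : 0 < x.+1%:R :> R by rewrite ltr0n.
rewrite ler_pdivlMr //. have := f_ge_marg x. rewrite -natr1. nra.
Qed.

End Conc.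

Section Round.
Variable R : realFieldType.
Variables (n M : nat) (w : 'I_n -> nat -> R).
Local Open Scope ring_scope.
Hypothesis w0 : forall i, w i 0%N = 0.
Hypothesis wmono : forall i x, w i x <= w i x.+1.
Hypothesis wconc : forall i x, w i x.+2 - w i x.+1 <= w i x.+1 - w i x.
Variable s : profile R n.
Hypothesis hN : nash M w s.

Lemma wnn i x : 0 <= w i x.
Proof. elim: x => [|x IH]; [by rewrite w0|exact: le_trans IH (wmono i x)]. Qed.

Lemma bigmax_ge (F : 'I_n -> R) j : F j <= \big[Num.max/0]_(i < n) F i.
Proof.
rewrite (bigD1 j) //=. by rewrite le_max lexx.
Qed.

Lemma bigmax_ge0 (F : 'I_n -> R) : 0 <= \big[Num.max/0]_(i < n) F i.
Proof.
elim: (index_enum _) => [|a r IH]; first by rewrite big_nil.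
by rewrite big_cons le_max IH orbT.
Qed.

Lemma bigmax_le (F : 'I_n -> R) c : 0 <= c -> (forall i, F i <= c) ->
  \big[Num.max/0]_(i < n) F i <= c.
Proof.
move=> c0 hF. elim/big_ind: _ => //= x y hx hy. by rewrite ge_max hx hy.
Qed.

Local Notation X := (alloc M s).

Lemma round_upper :
  \sum_i w i (X i) <= M%:R * \big[Num.max/0]_(i < n) w i 1%N.
Proof.
set D := \big[Num.max/0]_(i < n) w i 1%N.
apply: (@le_trans _ _ (\sum_i (X i)%:R * D)).
  apply: ler_sum => i _. apply: le_trans (f_le_lin (w0 i) (wconc i) _) _.
  apply: ler_wpM2l; [exact: ler0n|exact: bigmax_ge].
rewrite -mulr_suml -natr_sum. apply: ler_wpM2r; first exact: bigmax_ge0.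
by rewrite ler_nat alloc_total.
Qed.


Lemma upd_same i r : upd s i r i = r.
Proof. by rewrite /upd; case: eqP. Qed.

Lemma upd_other i r k : k != i -> upd s i r k = s k.
Proof. by rewrite /upd; case: eqP. Qed.

Lemma X_le_sum k : (X k <= \sum_l X l)%N.
Proof. by rewrite (bigD1 k) //= leq_addr. Qed.

Lemma sumX_ge k : (X k + \sum_(l | before s l k) X l <= \sum_l X l)%N.
Proof.
rewrite [X in (_ <= X)%N](bigD1 k) //= leq_add2l.
by apply: sum_sub => l /andP[].
Qed.

Lemma two_le k j : k != j ->
  (X k + X j + \sum_(l | (l != k) && (l != j)) X l = \sum_l X l)%N.
Proof.
move=> kj. rewrite [in RHS](bigD1 k) //= [in RHS](bigD1 j) /= ?addnA //.
by rewrite eq_sym.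
Qed.

Lemma full_if_short : (\sum_l X l < M)%N -> forall k, X k = req s k.
Proof.
move=> lt k. apply/eqP; rewrite eqn_leq alloc_le_req /= leqNgt; apply/negP => xk.
have e := alloc_eq M s k. have p := alloc_prefix M s k. have g := sumX_ge k.
lia.
Qed.

Lemma dev_gain i r : valid_req M (w i) r -> r.1 = (X i).+1 ->
  (\sum_(k | before (upd s i r) k i) req s k <= M - (X i).+1)%N ->
  w i (X i).+1 <= w i (X i).
Proof.
move=> vr r1 hB. have hM : ((X i).+1 <= M)%N by move: vr => /and3P[]; rewrite r1.
have := hN.2 i r vr.
rewrite alloc_eq /req upd_same r1.
rewrite (@eq_bigr _ _ _ _ _ _ _ (fun k => (s k).1)); last first.
  by move=> k /andP[_ ki]; rewrite upd_other.
move: hB; rewrite /req => hB.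
have -> : minn (X i).+1 (M - \sum_(i0 | before (upd s i r) i0 i) (s i0).1) = (X i).+1.
  lia.
by [].
Qed.


Lemma round_lower i : (0 < M)%N ->
  M%:R * (w i (X i).+1 - w i (X i)) <= \sum_j w j (X j).
Proof.
move=> M0.
have sum0 : 0 <= \sum_j w j (X j) by apply: sumr_ge0 => j _; exact: wnn.
case: (leP (w i (X i).+1 - w i (X i)) 0) => [dle|dpos].
  apply: le_trans sum0. apply: mulr_ge0_le0; [exact: ler0n|exact: dle].
have nogain : ~ (w i (X i).+1 <= w i (X i)) by move=> h; move: dpos; rewrite subr_gt0 ltNge h.
have full : (\sum_l X l = M)%N.
  apply/eqP; rewrite eqn_leq alloc_total /= leqNgt; apply/negP => lt.
  have fk := full_if_short lt.
  apply: nogain; apply: (@dev_gain i ((X i).+1, 0)) => //.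
    rewrite /valid_req /= lexx wnn andbT.
    rewrite andbT; exact: leq_ltn_trans (X_le_sum i) lt.
  apply: (@leq_trans (\sum_(k | k != i) req s k)).
    by apply: sum_sub => k /andP[].
  rewrite (@eq_bigr _ _ _ _ _ _ _ X); last by move=> k _; rewrite fk.
  move: lt; rewrite (bigD1 i) //=. lia.
have rat j : j != i -> (0 < X j)%N ->
    w i (X i).+1 / (X i).+1%:R <= Defs.ratio (s j).
  move=> ji xj. rewrite leNgt; apply/negP => lt.
  have t2 := two_le ji.
  have eB := alloc_eq M s j. have pB := alloc_prefix M s j.
  have Bj : (\sum_(k | before s k j) req s k < M)%N by lia.
  have pw := sum_eq_pointwise (P := before s ^~ j) (alloc_le_req M s).
  have pw' : forall k, before s k j -> X k = req s k.
    by apply: pw; rewrite pB; apply/minn_idPr; exact: ltnW.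
  apply: nogain; apply: (@dev_gain i ((X i).+1, w i (X i).+1)) => //.
    rewrite /valid_req /= lexx wnn ?andbT. move: t2; rewrite full. lia.
  apply: (@leq_trans (\sum_(k | before s k j && (k != i)) req s k)).
    apply: sum_sub => k /andP[pk ki]. rewrite ki andbT.
    move: pk; rewrite /prec upd_same upd_other // => pk.
    have hk : w i (X i).+1 / (X i).+1%:R <= Defs.ratio (s k).
      case/orP: pk => [/ltW h|/andP[/eqP e _]]; first exact: h. rewrite e; exact: lexx.
    have ljk : Defs.ratio (s j) < Defs.ratio (s k) := lt_le_trans lt hk.
    rewrite /before /prec ljk /=. apply/eqP => kj. by move: ljk; rewrite kj ltxx.
  rewrite (@eq_bigr _ _ _ _ _ _ _ X); last by move=> k /andP[bk _]; rewrite pw'.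
  apply: (@leq_trans (\sum_(l | (l != i) && (l != j)) X l)).
    apply: sum_sub => k /andP[/andP[_ kj] ki]. by rewrite ki kj.
  have ij : i != j by rewrite eq_sym.
  have := two_le ij. rewrite full. lia.
have each j : (X j)%:R * (w i (X i).+1 - w i (X i)) <= w j (X j).
  case: (eqVneq j i) => [->|ji]; first exact: (f_ge_marg (w0 i) (wconc i)).
  case: (posnP (X j)) => [->|xj]; first by rewrite mul0r w0.
  have hr := rat j ji xj.
  have hm := g_ge_marg (w0 i) (wconc i) (X i).
  have vj := hN.1 j. move: vj => /and3P[_ v0 vle].
  have rq : Defs.ratio (s j) <= w j (req s j) / (req s j)%:R.
    rewrite /Defs.ratio. apply: ler_wpM2r => //. by rewrite invr_ge0 ler0n.
  have gd := g_dec (w0 j) (wconc j) xj (alloc_le_req M s j).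
  have := le_trans hm (le_trans hr (le_trans rq gd)).
  by rewrite ler_pdivlMr ?ltr0n // mulrC.
have -> : M%:R = (\sum_l X l)%:R :> R by rewrite full.
rewrite natr_sum mulr_suml. apply: ler_sum => j _. exact: each.
Qed.

End Round.

Local Open Scope ring_scope.

Theorem lemma1 (R : realFieldType) (n m k : nat)
  (v : 'I_n -> nat -> R)
  (hv0 : forall i, v i 0%N = 0)
  (hvnn : forall i x, 0 <= v i x)
  (hvmono : forall i x, v i x <= v i x.+1)
  (hvconc : forall i x, v i x.+2 - v i x.+1 <= v i x.+1 - v i x)
  (mb : nat -> nat)
  (hmb : forall t, (1 <= t <= k)%N -> (0 < mb t)%N)
  (hsum : (\sum_(1 <= t < k.+1) mb t)%N = m)
  (s : nat -> profile R n)
  (heq : myopic_eq v k mb s) :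
  forall t, (1 <= t <= k)%N ->
    Delta v mb s t >= sw_round v mb s t / (mb t)%:R /\
    sw_round v mb s t / (mb t)%:R >= Delta v mb s t.+1.
Proof.
move=> t /andP[t1 tk].
have hN := heq t (introT andP (conj t1 tk)).
have M0 := hmb t (introT andP (conj t1 tk)).
set w := vt v mb s t.
have w0 : forall i, w i 0%N = 0 by move=> i; rewrite /w /vt add0n subrr.
have wmono : forall i x, w i x <= w i x.+1.
  by move=> i x; rewrite /w /vt lerD2r addSn hvmono.
have wconc : forall i x, w i x.+2 - w i x.+1 <= w i x.+1 - w i x.
  move=> i x; rewrite /w /vt !addSn. have := hvconc i (x + alpha mb s t.-1 i)%N. lra.
have Mp : 0 < (mb t)%:R :> R by rewrite ltr0n.
have sum0 : 0 <= sw_round v mb s t.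
  by apply: sumr_ge0 => j _; exact: (wnn w0 wmono).
split.
  rewrite ler_pdivrMr // mulrC. exact: (round_upper (mb t) w0 wconc (s t)).
apply: bigmax_le; first by apply: divr_ge0 => //; exact: ler0n.
move=> i. rewrite ler_pdivlMr // mulrC.
have := round_lower w0 wmono wconc hN i M0.
suff -> : vt v mb s t.+1 i 1%N =
  w i (alloc (mb t) (s t) i).+1 - w i (alloc (mb t) (s t) i) by [].
rewrite /w /vt. case: t t1 tk hN M0 w w0 wmono wconc Mp sum0 => [//|t'] _ _ _ _ _ _ _ _ _ _ /=.
set a := alpha mb s t' i. set x := alloc (mb t'.+1) (s t'.+1) i.
have -> : (1 + (a + x) = x.+1 + a)%N by lia.
rewrite (addnC a x). lra.
Qed.
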